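(* With $C$, $C^0=C\setminus C(\mathbb F_{p^2})$ and $\mathrm{End}(t)=\{A\in\mathrm{Mat}_3(\mathbb F_{p^2}):A\cdot t\in k\cdot t\}$ for $t\in C^0(k)$ (viewed as a column vector), one has \[\{t\in C^0(k):\mathrm{End}(t)\simeq\mathbb F_{p^6}\}=C^0(\mathbb F_{p^6}).\]
   Context: $k$ is algebraically closed of characteristic $p$ and $C\subset\mathbb P^2$ is the Fermat curve $X_1^{p+1}+X_2^{p+1}+X_3^{p+1}=0$. *)

(* Defs.v *)
From HB Require Import structures.
From mathcomp Require Import all_boot all_order all_algebra.
Set Implicit Arguments. Unset Strict Implicit. Unset Printing Implicit Defensive.
Import GRing.Theory.
Local Open Scope ring_scope.

Definition in_Fq (k : fieldType) (q : nat) (x : k) : Prop := x ^+ q = x.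

(* A point of P^2(k) is represented by a nonzero column vector t (up to scaling).
   It is F_q-rational iff some nonzero multiple of t has all coordinates in F_q. *)
Definition rat_pt (k : fieldType) (q : nat) (t : 'cV[k]_3) : Prop :=
  exists c : k, c != 0 /\ forall i : 'I_3, in_Fq q (c * t i ord0).

Definition on_fermat (k : fieldType) (p : nat) (t : 'cV[k]_3) : Prop :=
  \sum_(i < 3) (t i ord0) ^+ p.+1 = 0.

Definition in_End (k : fieldType) (p : nat) (t : 'cV[k]_3) (A : 'M[k]_3) : Prop :=
  (forall i j : 'I_3, in_Fq (p ^ 2)%N (A i j)) /\ exists c : k, A *m t = c *: t.

Definition End_iso_Fp6 (k : fieldType) (p : nat) (t : 'cV[k]_3) : Prop :=
  exists (F : finFieldType) (f : F -> 'M[k]_3),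
    #|F| = (p ^ 6)%N /\
    f 1 = 1 /\
    (forall x y, f (x + y) = f x + f y) /\
    (forall x y, f (x * y) = f x * f y) /\
    injective f /\
    (forall A, in_End p t A <-> exists x, f x = A).

(* Main.v *)
Require Import Defs.
From HB Require Import structures.
From mathcomp Require Import all_boot all_order all_algebra.
From mathcomp Require Import all_field.
From mathcomp Require Import ring zify.
Set Implicit Arguments. Unset Strict Implicit. Unset Printing Implicit Defensive.
Import GRing.Theory.
Local Open Scope ring_scope.


Section Frob.
Variables (k : fieldType) (p : nat).
Hypothesis hp : p \in [pchar k].

Lemma frD n (x y : k) : (x + y) ^+ (p ^ n) = x ^+ (p ^ n) + y ^+ (p ^ n).
Proof.
elim: n => [|n IH]; first by rewrite !expr1.
rewrite expnSr !exprM IH.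
have := pFrobenius_autD_comm hp (mulrC (x ^+ (p ^ n)) (y ^+ (p ^ n))).
by rewrite !pFrobenius_autE.
Qed.

Lemma fr0 n : (0 : k) ^+ (p ^ n) = 0.
Proof. by rewrite expr0n expn_eq0 eqn0Ngt prime_gt0 ?(pcharf_prime hp). Qed.

Lemma p_gt1 : (1 < p)%N. Proof. exact: prime_gt1 (pcharf_prime hp). Qed.
Lemma pn_gt0 n : (0 < p ^ n)%N. Proof. by rewrite expn_gt0 prime_gt0 ?(pcharf_prime hp). Qed.

Lemma frM n (x y : k) : (x * y) ^+ (p ^ n) = x ^+ (p ^ n) * y ^+ (p ^ n).
Proof. exact: exprMn. Qed.

Lemma frN n (x : k) : (- x) ^+ (p ^ n) = - x ^+ (p ^ n).
Proof. by apply/eqP; rewrite -subr_eq0 opprK -frD addNr fr0. Qed.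

Lemma frB n (x y : k) : (x - y) ^+ (p ^ n) = x ^+ (p ^ n) - y ^+ (p ^ n).
Proof. by rewrite frD frN. Qed.

Lemma fr1 n : (1 : k) ^+ (p ^ n) = 1. Proof. exact: expr1n. Qed.

Lemma fr_sum n I r (P : pred I) (F : I -> k) :
  (\sum_(i <- r | P i) F i) ^+ (p ^ n) = \sum_(i <- r | P i) (F i) ^+ (p ^ n).
Proof. exact: (big_morph (fun x : k => x ^+ (p ^ n)) (frD n) (fr0 n)). Qed.

Lemma frfr m n (x : k) : (x ^+ (p ^ m)) ^+ (p ^ n) = x ^+ (p ^ (m + n)).
Proof. by rewrite -exprM expnD. Qed.

Lemma fr_eq0 n (x : k) : (x ^+ (p ^ n) == 0) = (x == 0).
Proof. by rewrite expf_eq0 pn_gt0. Qed.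

Lemma fr_inj n : injective (fun x : k => x ^+ (p ^ n)).
Proof. by move=> x y /eqP; rewrite -subr_eq0 -frB fr_eq0 subr_eq0 => /eqP. Qed.

Lemma fr_fix m j (x : k) : x ^+ (p ^ m) = x -> x ^+ (p ^ (m * j)) = x.
Proof.
move=> hx; elim: j => [|j IH]; first by rewrite muln0 expr1.
by rewrite mulnS expnD exprM hx IH.
Qed.

Definition frm n a b (M : 'M[k]_(a, b)) := map_mx (fun x => x ^+ (p ^ n)) M.

Lemma frmE n a b (M : 'M[k]_(a, b)) i j : frm n M i j = M i j ^+ (p ^ n).
Proof. by rewrite mxE. Qed.

Lemma frm_mul n a b c (A : 'M[k]_(a, b)) (B : 'M[k]_(b, c)) :
  frm n (A *m B) = frm n A *m frm n B.
Proof.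
apply/matrixP => i j; rewrite !mxE fr_sum; apply: eq_bigr => l _.
by rewrite !mxE frM.
Qed.

Lemma frm_scale n a b (x : k) (A : 'M[k]_(a, b)) : frm n (x *: A) = x ^+ (p ^ n) *: frm n A.
Proof. by apply/matrixP => i j; rewrite !mxE frM. Qed.

Lemma frm_frm m n a b (A : 'M[k]_(a, b)) : frm n (frm m A) = frm (m + n) A.
Proof. by apply/matrixP => i j; rewrite !mxE frfr. Qed.

Lemma frm_eq0 n a b (A : 'M[k]_(a, b)) : (frm n A == 0) = (A == 0).
Proof.
apply/eqP/eqP => [h|->]; last by apply/matrixP => i j; rewrite !mxE fr0.
apply/matrixP => i j; have := congr1 (fun M : 'M[k]_(a, b) => M i j) h; rewrite !mxE.
by move/eqP; rewrite fr_eq0 => /eqP.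
Qed.

Lemma frm_fix m j a b (A : 'M[k]_(a, b)) :
  (forall i l, A i l ^+ (p ^ m) = A i l) -> frm (m * j) A = A.
Proof. by move=> h; apply/matrixP => i l; rewrite mxE fr_fix. Qed.

End Frob.

Lemma hilb90 (k : closedFieldType) n N (t : 'cV[k]_n) lam :
  (1 < N)%N -> t != 0 -> (forall i, t i ord0 ^+ N = lam * t i ord0) ->
  exists c, c != 0 /\ forall i, (c * t i ord0) ^+ N = c * t i ord0.
Proof.
case: N => [|[|M]] // _ /matrix0Pn [i [j tij]] ht.
have j0 : j = ord0 by rewrite ord1.
subst j.
have lam0 : lam != 0.
  apply/eqP => l0; move: (ht i); rewrite l0 mul0r => /eqP.
  by rewrite expf_eq0 (negbTE tij) andbF.
have [mu hmu] := @solve_monicpoly k M.+1 (fun m => if m == 0%N then lam^-1 else 0) isT.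
rewrite big_ord_recl /= big1 ?addr0 ?expr0 ?mulr1 in hmu; last first.
  by move=> l _; rewrite mul0r.
have mu0 : mu != 0.
  by apply/eqP => m0; move: hmu; rewrite m0 expr0n /= => /esym/eqP; rewrite invr_eq0 (negbTE lam0).
exists mu; split => // l.
rewrite exprMn ht exprSr hmu; field.
by [].
Qed.
Arguments frm {k} p n {a b} M.


Lemma trmxZ' (k : fieldType) m n (c : k) (A : 'M[k]_(m, n)) : (c *: A)^T = c *: A^T.
Proof. by apply/matrixP => i j; rewrite !mxE. Qed.

Lemma powmx (k : fieldType) n (A : 'M[k]_n) (t : 'cV_n) c m :
  A *m t = c *: t -> A ^+ m *m t = c ^+ m *: t.
Proof.
move=> h; elim: m => [|m IH]; first by rewrite !expr0 scale1r; apply: mul1mx.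
by rewrite !exprS -[A * _]/(A *m A ^+ m) -mulmxA IH -scalemxAr h scalerA -exprSr exprS.
Qed.

Lemma scal_inj (k : fieldType) n (t : 'cV[k]_n) a b : t != 0 -> a *: t = b *: t -> a = b.
Proof.
move=> t0 /eqP; rewrite -subr_eq0 -scalerBl scalemx_eq0 (negbTE t0) orbF subr_eq0.
by move/eqP.
Qed.

Lemma eig_frob (k : fieldType) p (hp : p \in [pchar k]) n (B : 'M[k]_n) (v : 'cV_n) a j :
  (forall i l, B i l ^+ (p ^ 2) = B i l) -> B *m v = a *: v ->
  B *m frm p (2 * j) v = a ^+ (p ^ (2 * j)) *: frm p (2 * j) v.
Proof.
move=> hB hv; have := congr1 (frm p (2 * j)) hv.
by rewrite frm_mul // frm_scale // frm_fix.
Qed.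

Lemma exists_nonfix (F : finFieldType) p : (1 < p)%N -> #|F| = (p ^ 6)%N ->
  exists x : F, x ^+ (p ^ 2) != x.
Proof.
move=> p1 cF; case: (boolP [exists x : F, x ^+ (p ^ 2) != x]) => [/existsP //|/existsPn hall].
exfalso.
pose P : {poly F} := 'X^(p ^ 2) - 'X.
have sP : size P = (p ^ 2).+1.
  rewrite /P size_addl size_polyXn // size_opp size_polyX ltnS.
  by rewrite expnS (leq_trans p1) // leq_pmulr // expn_gt0 ltnW.
have P0 : P != 0 by rewrite -size_poly_gt0 sP.
have hr : all (root P) (enum F).
  apply/allP => x _; move: (hall x); rewrite negbK /root /P !hornerE => /eqP ->.
  by rewrite subrr.
have := max_poly_roots P0 hr (enum_uniq F).
by rewrite -cardE cF sP ltnS leq_exp2l.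
Qed.

Lemma fwd (k : closedFieldType) p (hp : p \in [pchar k]) (t : 'cV[k]_3) :
  t != 0 -> End_iso_Fp6 p t -> rat_pt (p ^ 6) t.
Proof.
move=> t0 [F [f [cF [f1 [fD [fM [finj hE]]]]]]].
have p1 := p_gt1 hp.
have f0 : f 0 = 0 by apply: (addrI (f 0)); rewrite -fD !addr0.
have fB : forall x y, f (x - y) = f x - f y.
  by move=> x y; apply: (addIr (f y)); rewrite -fD !subrK.
have fX : forall x n, f (x ^+ n) = f x ^+ n.
  move=> x; elim=> [|n IH]; first by rewrite !expr0.
  by rewrite !exprS fM IH.
have KER : forall y, y != 0 -> f y *m t != 0.
  move=> y y0; apply: contra t0 => /eqP h.
  have e : f y^-1 *m f y = 1%:M by rewrite -[_ *m _]/(f y^-1 * f y) -fM mulVf // f1.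
  by rewrite -[t]mul1mx -e -mulmxA h mulmx0.
have [x hx] := exists_nonfix p1 cF.
have xQ : x ^+ (p ^ 6) = x by rewrite -cF expf_card.
have [hAq [c hc]] := (hE (f x)).2 (ex_intro _ x erefl).
have cq : c ^+ (p ^ 2) != c.
  apply: contra (KER _ (_ : x ^+ (p ^ 2) - x != 0)) => [/eqP e|]; last by rewrite subr_eq0.
  by rewrite fB fX mulmxBl (powmx _ hc) hc e subrr.
have cQ : c ^+ (p ^ 6) = c.
  by apply: (scal_inj t0); rewrite -(powmx (p ^ 6) hc) -fX xQ hc.
pose v j := frm p (2 * j) t.
have ev : forall j, f x *m v j = c ^+ (p ^ (2 * j)) *: v j.
  by move=> j; apply: eig_frob.
have vnz : forall j, v j != 0 by move=> j; rewrite frm_eq0.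
pose cc (j : 'I_3) := c ^+ (p ^ (2 * j)).
have cm : forall m, (0 < m < 3)%N -> c ^+ (p ^ (2 * m)) != c.
  move=> [|[|[|m]]] //= _.
  apply: contra cq => /eqP; rewrite -[(2 * 2)%N]/4%N => e; apply/eqP.
  by rewrite -[RHS]cQ -[in LHS]e frfr.
have ccinj : forall j1 j2 : 'I_3, cc j1 = cc j2 -> j1 = j2.
  suff H : forall j1 j2 : 'I_3, (j1 <= j2)%N -> cc j1 = cc j2 -> j1 = j2.
    move=> j1 j2; case: (leqP j1 j2) => [le|/ltnW le] e; first exact: H.
    by apply/esym/H.
  move=> j1 j2 le e; case: (ltnP j1 j2) => [lt|ge]; last first.
    by apply/val_inj/eqP; rewrite eqn_leq le ge.
  exfalso.
  have h : c ^+ (p ^ (2 * (j2 - j1))) = c.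
    apply: (@fr_inj _ _ hp (2 * j1)); rewrite /= frfr -mulnDr subnK ?(ltnW lt) //.
  have hm : (0 < j2 - j1 < 3)%N.
    by rewrite subn_gt0 lt /= (leq_ltn_trans (leq_subr _ _) (ltn_ord j2)).
  by move: (cm _ hm); rewrite h eqxx.
pose g := (f x)^T.
have evT : forall j : 'I_3, ((v j)^T <= eigenspace g (cc j))%MS.
  by move=> j; apply/eigenspaceP; rewrite /g -trmx_mul ev trmxZ'.
have vT0 : forall j, (v j)^T != 0.
  by move=> j; apply: contra (vnz j) => /eqP h; rewrite -[v j]trmxK h linear0.
have r1 : forall j : 'I_3, (1 <= \rank (eigenspace g (cc j)))%N.
  move=> j; apply: leq_trans (mxrankS (evT j)).
  by rewrite rank_rV vT0.
have dir := @mxdirect_sum_eigenspace _ _ _ g predT cc (fun j1 j2 _ _ => ccinj j1 j2).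
have := rank_leq_col (\sum_(j < 3) eigenspace g (cc j))%MS.
move: dir; rewrite mxdirectE /= => /eqP ->.
rewrite !big_ord_recl big_ord0 addn0 => hs.
have rE0 : (\rank (eigenspace g (cc ord0)) <= 1)%N.
  move: (r1 (lift ord0 ord0)) (r1 (lift ord0 (lift ord0 ord0))) hs; lia.
have c0 : cc ord0 = c by rewrite /cc /= muln0 expn0 expr1.
rewrite c0 in rE0.
have tE : (t^T <= eigenspace g c)%MS.
  by apply/eigenspaceP; rewrite /g -trmx_mul hc trmxZ'.
have tT0 : t^T != 0 by apply: contra t0 => /eqP h; rewrite -[t]trmxK h linear0.
have eq : (eigenspace g c <= t^T)%MS.
  rewrite -(mxrank_leqif_sup tE).2 eqn_leq (mxrankS tE) /= rank_rV tT0.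
  exact: rE0.
have v3E : ((v 3%N)^T <= eigenspace g c)%MS.
  apply/eigenspaceP; rewrite /g -trmx_mul ev trmxZ'; congr (_ *: _); exact: cQ.
have [lam hl] := sub_rVP (submx_trans v3E eq).
have ht : forall i, t i ord0 ^+ (p ^ 6) = lam * t i ord0.
  move=> i; have := congr1 (fun M : 'rV_3 => M ord0 i) hl; rewrite !mxE; exact.
have p6 : (1 < p ^ 6)%N.
  by rewrite (leq_trans p1) // -{1}(expn1 p) leq_pexp2l // ltnW.
have [c1 [c10 hc1]] := hilb90 p6 t0 ht.
by exists c1; split.
Qed.


Definition fixq (k : closedFieldType) (p : nat) (hp : p \in [pchar k]) : {pred k} :=
  fun x => x ^+ (p ^ 6) == x.

Lemma fixq_divring (k : closedFieldType) p (hp : p \in [pchar k]) : divring_closed (fixq hp).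
Proof.
split; first by rewrite unfold_in /fixq expr1n.
  by move=> x y; rewrite !unfold_in /fixq frB // => /eqP -> /eqP ->.
by move=> x y; rewrite !unfold_in /fixq exprMn exprVn => /eqP -> /eqP ->.
Qed.

HB.instance Definition _ (k : closedFieldType) p (hp : p \in [pchar k]) :=
  GRing.isDivringClosed.Build k (fixq hp) (fixq_divring hp).

Record FF (k : closedFieldType) p (hp : p \in [pchar k]) :=
  MkFF { ffval :> k; ffvalP : ffval \in fixq hp }.

HB.instance Definition _ (k : closedFieldType) p (hp : p \in [pchar k]) :=
  [isSub for @ffval k p hp].
HB.instance Definition _ (k : closedFieldType) p (hp : p \in [pchar k]) :=
  [Choice of FF hp by <:].
HB.instance Definition _ (k : closedFieldType) p (hp : p \in [pchar k]) :=
  [SubChoice_isSubIntegralDomain of FF hp by <:].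
HB.instance Definition _ (k : closedFieldType) p (hp : p \in [pchar k]) :=
  [SubIntegralDomain_isSubField of FF hp by <:].

Definition polyQ (k : closedFieldType) p : {poly k} := 'X^(p ^ 6) - 'X.
Definition rsQ (k : closedFieldType) p : seq k := projT1 (closed_field_poly_normal (polyQ k p)).

Section RS.
Variables (k : closedFieldType) (p : nat) (hp : p \in [pchar k]).

Lemma size_polyQ : size (polyQ k p) = (p ^ 6).+1.
Proof.
have p1 := p_gt1 hp.
rewrite /polyQ size_addl size_polyXn // size_opp size_polyX ltnS.
by rewrite (leq_trans p1) // -{1}(expn1 p) leq_pexp2l // ltnW.
Qed.

Lemma polyQ_neq0 : polyQ k p != 0.
Proof. by rewrite -size_poly_gt0 size_polyQ. Qed.

Lemma rsQ_mem x : (x \in rsQ k p) = (x ^+ (p ^ 6) == x).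
Proof.
rewrite /rsQ; case: closed_field_poly_normal => r /= e.
have : root (polyQ k p) x = (x ^+ (p ^ 6) == x).
  by rewrite /root /polyQ !hornerE subr_eq0.
rewrite {1}e rootZ ?root_prod_XsubC //.
by rewrite lead_coef_eq0 polyQ_neq0.
Qed.

Lemma rsQ_size : size (rsQ k p) = (p ^ 6)%N.
Proof.
rewrite /rsQ; case: closed_field_poly_normal => r /= e.
have := congr1 (fun q : {poly k} => size q) e; rewrite /= size_scale ?lead_coef_eq0 ?polyQ_neq0 //.
by rewrite size_prod_XsubC size_polyQ => -[].
Qed.

Lemma rsQ_uniq : uniq (rsQ k p).
Proof.
have sep : separable_poly (polyQ k p).
  have N0 : (p ^ 6)%:R = 0 :> {poly k}.
    by rewrite -polyC_natr natrX (pcharf0 hp) expr0n polyC0.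
  rewrite separable_poly.unlock.
  have -> : (polyQ k p)^`() = -1.
    by rewrite /polyQ derivB derivXn derivX -mulr_natr N0 mulr0 sub0r.
  by rewrite -scaleN1r coprimepZr ?oppr_eq0 ?oner_eq0 // coprimep1.
move: sep; rewrite /rsQ; case: closed_field_poly_normal => r /= e.
rewrite {1}e (eqp_separable (eqp_scale _ _)) ?separable_prod_XsubC //.
by rewrite lead_coef_eq0 polyQ_neq0.
Qed.
End RS.

Lemma ffval_rs (k : closedFieldType) p (hp : p \in [pchar k]) (x : FF hp) :
  ffval x \in rsQ k p.
Proof. by rewrite (rsQ_mem hp); have := ffvalP x; rewrite unfold_in. Qed.

Definition toI (k : closedFieldType) p (hp : p \in [pchar k]) (x : FF hp) :
  'I_(size (rsQ k p)) := Ordinal (etrans (index_mem _ _) (ffval_rs x)).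
Definition ofI (k : closedFieldType) p (hp : p \in [pchar k]) (i : 'I_(size (rsQ k p))) :
  option (FF hp) := insub (nth 0 (rsQ k p) i).
Lemma toIK (k : closedFieldType) p (hp : p \in [pchar k]) : pcancel (@toI k p hp) (@ofI k p hp).
Proof. by move=> x; rewrite /ofI /= nth_index ?ffval_rs // valK. Qed.

HB.instance Definition _ (k : closedFieldType) p (hp : p \in [pchar k]) :
  isCountable (FF hp) := PCanIsCountable (@toIK k p hp).
HB.instance Definition _ (k : closedFieldType) p (hp : p \in [pchar k]) :
  isFinite (FF hp) := PCanIsFinite (@toIK k p hp).

Lemma card_FF (k : closedFieldType) p (hp : p \in [pchar k]) : #|(FF hp : finType)| = (p ^ 6)%N.
Proof.
rewrite -(rsQ_size hp) cardE -(size_map (@ffval k p hp)).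
apply: perm_size; apply: uniq_perm.
- by rewrite map_inj_uniq ?enum_uniq //; exact: val_inj.
- exact: rsQ_uniq.
move=> y; apply/idP/idP.
  by case/mapP => x _ ->; exact: ffval_rs.
rewrite (rsQ_mem hp) => hy.
have hy' : y \in fixq hp by rewrite unfold_in.
by apply/mapP; exists (@MkFF k p hp y hy'); rewrite ?mem_enum.
Qed.

Lemma FF_fix (k : closedFieldType) p (hp : p \in [pchar k]) (x : FF hp) :
  ffval x ^+ (p ^ 6) = ffval x.
Proof. by apply/eqP; have := ffvalP x; rewrite unfold_in. Qed.

Lemma FF_val_add (k : closedFieldType) p (hp : p \in [pchar k]) (x y : FF hp) :
  ffval (x + y) = ffval x + ffval y.
Proof. by []. Qed.
Lemma FF_val_mul (k : closedFieldType) p (hp : p \in [pchar k]) (x y : FF hp) :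
  ffval (x * y) = ffval x * ffval y.
Proof. by []. Qed.
Lemma FF_val_one (k : closedFieldType) p (hp : p \in [pchar k]) :
  ffval (1 : FF hp) = 1.
Proof. by []. Qed.


Definition i0 : 'I_3 := @Ordinal 3 0 isT.
Definition i1 : 'I_3 := @Ordinal 3 1 isT.
Definition i2 : 'I_3 := @Ordinal 3 2 isT.

Lemma ord3P (i : 'I_3) : i = i0 \/ i = i1 \/ i = i2.
Proof.
case: i => [[|[|[|m]]] hm] //.
- by left; apply/val_inj.
- by right; left; apply/val_inj.
- by right; right; apply/val_inj.
Qed.

Lemma sum3 (R : nmodType) (F : 'I_3 -> R) : \sum_(i < 3) F i = F i0 + F i1 + F i2.
Proof.
rewrite !big_ord_recl big_ord0 addr0 addrA.
by congr (_ + _ + _); congr F; apply/val_inj.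
Qed.

Section Geo.
Variable k : fieldType.
Implicit Types u v w a b x : 'cV[k]_3.

Local Notation "u `c i" := (u i ord0) (at level 3, i at level 2, format "u `c i").

Definition dot u v := \sum_(i < 3) u`c i * v`c i.
Definition cross u v : 'cV[k]_3 := \col_i
  (if i == i0 then u`c i1 * v`c i2 - u`c i2 * v`c i1
   else if i == i1 then u`c i2 * v`c i0 - u`c i0 * v`c i2
   else u`c i0 * v`c i1 - u`c i1 * v`c i0).

Lemma dotE u v : dot u v = u`c i0 * v`c i0 + u`c i1 * v`c i1 + u`c i2 * v`c i2.
Proof. by rewrite /dot sum3. Qed.

Lemma crossE u v :
  [/\ (cross u v)`c i0 = u`c i1 * v`c i2 - u`c i2 * v`c i1,
      (cross u v)`c i1 = u`c i2 * v`c i0 - u`c i0 * v`c i2 &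
      (cross u v)`c i2 = u`c i0 * v`c i1 - u`c i1 * v`c i0].
Proof. by rewrite !mxE. Qed.

Lemma vecP u v : u`c i0 = v`c i0 -> u`c i1 = v`c i1 -> u`c i2 = v`c i2 -> u = v.
Proof.
move=> h0 h1 h2; apply/matrixP => i j; rewrite ord1.
by case: (ord3P i) => [->|[->|->]].
Qed.


Lemma dotC u v : dot u v = dot v u.
Proof. by rewrite !dotE; ring. Qed.

Lemma dot_cross_l a b : dot a (cross a b) = 0.
Proof. by rewrite dotE !mxE /=; ring. Qed.

Lemma dot_cross_r a b : dot b (cross a b) = 0.
Proof. by rewrite dotE !mxE /=; ring. Qed.

Lemma cross_cross v a b : cross v (cross a b) = dot v b *: a - dot v a *: b.
Proof. by apply: vecP; rewrite !mxE /= !dotE; ring. Qed.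

Lemma crossZr v c x : cross v (c *: x) = c *: cross v x.
Proof. by apply: vecP; rewrite !mxE /=; ring. Qed.

Lemma crossC a b : cross a b = - cross b a.
Proof. by apply: vecP; rewrite !mxE /=; ring. Qed.

Lemma par3 v x : x != 0 -> cross v x = 0 -> exists l, v = l *: x.
Proof.
move=> /matrix0Pn [i [j]]; rewrite ord1 => hx hc.
have e0 : v`c i1 * x`c i2 - v`c i2 * x`c i1 = 0.
  by have := congr1 (fun M : 'cV[k]_3 => M i0 ord0) hc; rewrite !mxE.
have e1 : v`c i2 * x`c i0 - v`c i0 * x`c i2 = 0.
  by have := congr1 (fun M : 'cV[k]_3 => M i1 ord0) hc; rewrite !mxE.
have e2 : v`c i0 * x`c i1 - v`c i1 * x`c i0 = 0.
  by have := congr1 (fun M : 'cV[k]_3 => M i2 ord0) hc; rewrite !mxE.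
have H : forall A B C y : k, C = 0 -> A - B = C * y \/ A - B = - C * y -> A = B.
  by move=> A B C y -> [] h; apply/subr0_eq; rewrite h ?oppr0 mul0r.
case: (ord3P i) hx => [->|[->|->]] hx;
  [exists (v`c i0 / x`c i0) | exists (v`c i1 / x`c i1) | exists (v`c i2 / x`c i2)];
  apply: vecP; rewrite !mxE /=;
  match goal with hx : is_true (?X ?i ?j != 0) |- _ =>
  first [ by rewrite divfK
        | apply: (H _ _ _ (X i j)^-1 e0); (left; field; exact: hx) || (right; field; exact: hx)
        | apply: (H _ _ _ (X i j)^-1 e1); (left; field; exact: hx) || (right; field; exact: hx)
        | apply: (H _ _ _ (X i j)^-1 e2); (left; field; exact: hx) || (right; field; exact: hx) ] end.
Qed.

End Geo.

Section Geo2.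
Variables (k : closedFieldType) (p : nat).
Hypothesis hp : p \in [pchar k].

Lemma frm_cross n (a b : 'cV[k]_3) : frm p n (cross a b) = cross (frm p n a) (frm p n b).
Proof. by apply: vecP; rewrite !mxE /= frB // !frM. Qed.

Lemma frm_dot n (a b : 'cV[k]_3) : (dot a b) ^+ (p ^ n) = dot (frm p n a) (frm p n b).
Proof. by rewrite !dotE !mxE !frD // !frM. Qed.

Lemma frm0 (s : 'cV[k]_3) : frm p 0 s = s.
Proof. by apply/matrixP => i j; rewrite mxE expn0 expr1. Qed.

Lemma geo (s : 'cV[k]_3) : s != 0 -> on_fermat p s ->
  (forall i, s i ord0 ^+ (p ^ 6) = s i ord0) ->
  dot (frm p 4 s) (cross s (frm p 2 s)) = 0 -> rat_pt (p ^ 2) s.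
Proof.
move=> s0 hC hQ hD.
have p1 := p_gt1 hp.
have pq : (1 < p ^ 2)%N by rewrite (leq_trans p1) // -{1}(expn1 p) leq_pexp2l // ltnW.
have h01 : dot s (frm p 1 s) = 0.
  by rewrite dotE !mxE expn1; move: hC; rewrite /on_fermat sum3 !exprS.
have h12 : dot (frm p 1 s) (frm p 2 s) = 0.
  by have := frm_dot 1 s (frm p 1 s); rewrite h01 fr0 // frm_frm.
pose w := cross s (frm p 2 s).
case: (eqVneq w 0) => [w0|wn0].
  have [l hl] := par3 s0 (etrans (crossC _ _) (etrans (congr1 -%R w0) (oppr0 _))).
  have hl' : forall i, s i ord0 ^+ (p ^ 2) = l * s i ord0.
    by move=> i; have := congr1 (fun M : 'cV[k]_3 => M i ord0) hl; rewrite !mxE.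
  have [c [c0 hc]] := hilb90 pq s0 hl'.
  by exists c.
have fw : frm p 2 w = cross (frm p 2 s) (frm p 4 s) by rewrite frm_cross frm_frm.
have cw : cross w (frm p 2 w) = 0.
  rewrite fw cross_cross [dot w (frm p 4 s)]dotC hD [dot w _]dotC dot_cross_r.
  by rewrite !scale0r subrr.
have [l hl] := par3 wn0 (etrans (crossC _ _) (etrans (congr1 -%R cw) (oppr0 _))).
have hl' : forall i, w i ord0 ^+ (p ^ 2) = l * w i ord0.
  by move=> i; have := congr1 (fun M : 'cV[k]_3 => M i ord0) hl; rewrite !mxE.
have [mu [mu0 hmu]] := hilb90 pq wn0 hl'.
pose a := mu *: w.
have a0 : a != 0 by rewrite scalemx_eq0 negb_or mu0 wn0.
have ha : forall i, a i ord0 ^+ (p ^ 2) = a i ord0 by move=> i; rewrite mxE hmu.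
have c1w : cross (frm p 1 s) w = 0.
  by rewrite cross_cross h12 (dotC (frm p 1 s) s) h01 !scale0r subrr.
have c1a : cross (frm p 1 s) a = 0 by rewrite crossZr c1w scaler0.
have [nu hnu] := par3 a0 c1a.
have nu0 : nu != 0.
  apply: contra s0 => /eqP n0; move: hnu; rewrite n0 scale0r => /eqP.
  by rewrite frm_eq0.
exists (nu ^+ (p ^ 5))^-1; split; first by rewrite invr_eq0 expf_neq0.
move=> i.
have e : s i ord0 = nu ^+ (p ^ 5) * a i ord0 ^+ (p ^ 5).
  have := congr1 (fun M : 'cV[k]_3 => M i ord0) hnu; rewrite !mxE => h.
  by rewrite -hQ -[6%N]/(1 + 5)%N -frfr h exprMn.
rewrite /in_Fq e mulrA mulVf ?expf_neq0 // mul1r frfr addnC -frfr ha.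
by [].
Qed.

End Geo2.


Section Mat3.
Variable k : fieldType.
Implicit Types a b c : 'cV[k]_3.

Definition mat3 a b c : 'M[k]_3 :=
  \matrix_(i, j) (if j == i0 then a i ord0 else if j == i1 then b i ord0 else c i ord0).

Definition inv3 a b c : 'M[k]_3 := (dot c (cross a b))^-1 *:
  \matrix_(j, i) (if j == i0 then cross b c i ord0 else if j == i1 then cross c a i ord0
                  else cross a b i ord0).

Lemma mat3_mul (X : 'M[k]_3) a b c : X *m mat3 a b c = mat3 (X *m a) (X *m b) (X *m c).
Proof.
apply/matrixP => i j; rewrite !mxE.
by case: (ord3P j) => [->|[->|->]] /=; apply: eq_bigr => l _; rewrite mxE.
Qed.

Lemma mat3_inj a b c a' b' c' : mat3 a b c = mat3 a' b' c' -> [/\ a = a', b = b' & c = c'].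
Proof.
move=> h; have e := fun i j => congr1 (fun M : 'M[k]_3 => M i j) h.
split; apply/matrixP => i j; rewrite ord1.
- by have := e i i0; rewrite !mxE.
- by have := e i i1; rewrite !mxE.
- by have := e i i2; rewrite !mxE.
Qed.

Lemma inv3K a b c : dot c (cross a b) != 0 -> inv3 a b c *m mat3 a b c = 1%:M.
Proof.
move=> D0; apply/matrixP => i j; rewrite !mxE sum3 !mxE /=.
by case: (ord3P i) => [->|[->|->]]; case: (ord3P j) => [->|[->|->]];
  rewrite /= ?mxE /=; move: D0; rewrite dotE !mxE /= => D0; field.
Qed.

Lemma mat3K a b c : dot c (cross a b) != 0 -> mat3 a b c *m inv3 a b c = 1%:M.
Proof. by move/inv3K/mulmx1C. Qed.

Lemma uniq3 a b c (X Y : 'M[k]_3) : dot c (cross a b) != 0 ->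
  X *m a = Y *m a -> X *m b = Y *m b -> X *m c = Y *m c -> X = Y.
Proof.
move=> D0 ha hb hc.
by rewrite -[X]mulmx1 -(mat3K D0) mulmxA mat3_mul ha hb hc -mat3_mul -mulmxA mat3K // mulmx1.
Qed.

Lemma ex3 a b c la lb lc : dot c (cross a b) != 0 ->
  let M := mat3 (la *: a) (lb *: b) (lc *: c) *m inv3 a b c in
  [/\ M *m a = la *: a, M *m b = lb *: b & M *m c = lc *: c].
Proof.
move=> D0 M.
have : M *m mat3 a b c = mat3 (la *: a) (lb *: b) (lc *: c).
  by rewrite /M -mulmxA inv3K // mulmx1.
by rewrite mat3_mul => /mat3_inj.
Qed.

End Mat3.


Lemma bwd (k : closedFieldType) p (hp : p \in [pchar k]) (s : 'cV[k]_3) :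
  s != 0 -> on_fermat p s -> (forall i, s i ord0 ^+ (p ^ 6) = s i ord0) ->
  ~ rat_pt (p ^ 2) s -> End_iso_Fp6 p s.
Proof.
move=> s0 hC hQ hnr.
pose a := s; pose b := frm p 2 s; pose c := frm p 4 s.
have D0 : dot c (cross a b) != 0.
  by apply/eqP => hD; apply: hnr; apply: (geo hp s0 hC hQ hD).
have fa : frm p 2 c = a.
  by apply/matrixP => i j; rewrite ord1 !mxE frfr hQ.
have fb : frm p 2 a = b by [].
have fc : frm p 2 b = c by rewrite /b frm_frm.
pose Mc (x : k) := mat3 (x *: a) (x ^+ (p ^ 2) *: b) (x ^+ (p ^ 4) *: c) *m inv3 a b c.
have Mca : forall x, Mc x *m a = x *: a by move=> x; case: (ex3 (x) (x ^+ (p ^ 2)) (x ^+ (p ^ 4)) D0).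
have Mcb : forall x, Mc x *m b = x ^+ (p ^ 2) *: b by move=> x; case: (ex3 (x) (x ^+ (p ^ 2)) (x ^+ (p ^ 4)) D0).
have Mcc : forall x, Mc x *m c = x ^+ (p ^ 4) *: c by move=> x; case: (ex3 (x) (x ^+ (p ^ 2)) (x ^+ (p ^ 4)) D0).
have Mfix : forall x, x ^+ (p ^ 6) = x -> frm p 2 (Mc x) = Mc x.
  move=> x hx; apply: (uniq3 D0).
  - by rewrite -{1}fa -frm_mul // Mcc frm_scale // frfr -[(4 + 2)%N]/6%N hx fa Mca.
  - by rewrite -{1}fb -frm_mul // Mca frm_scale // fb Mcb.
  - by rewrite -{1}fc -frm_mul // Mcb frm_scale // frfr fc Mcc.
have MfixE : forall x, x ^+ (p ^ 6) = x -> forall i j, in_Fq (p ^ 2) (Mc x i j).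
  move=> x hx i j; have := congr1 (fun M : 'M[k]_3 => M i j) (Mfix x hx).
  by rewrite mxE.
have s6 : frm p (2 * 3) s = s by apply/matrixP => i j; rewrite ord1 mxE hQ.
exists (FF hp : finFieldType), (fun y => Mc (ffval y)).
split; first exact: card_FF.
split.
  rewrite FF_val_one; apply: (uniq3 D0); rewrite ?Mca ?Mcb ?Mcc ?expr1n scale1r; exact/esym/mul1mx.
split.
  move=> x y /=; apply: (uniq3 D0);
    by rewrite mulmxDl ?Mca ?Mcb ?Mcc ?frD // scalerDl.
split.
  move=> x y /=; apply: (uniq3 D0);
    by rewrite -[Mc _ * Mc _]/(Mc _ *m Mc _) -mulmxA ?Mca ?Mcb ?Mcc -scalemxAr
      ?Mca ?Mcb ?Mcc scalerA ?frM // mulrC.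
split.
  move=> x y /(congr1 (fun M : 'M[k]_3 => M *m a)); rewrite !Mca => /(scal_inj s0).
  exact: val_inj.
move=> A; split.
  move=> [hA [cA hcA]].
  have e2 : A *m b = cA ^+ (p ^ 2) *: b by exact: (eig_frob hp 1 hA hcA).
  have e4 : A *m c = cA ^+ (p ^ 4) *: c by exact: (eig_frob hp 2 hA hcA).
  have e6 := eig_frob hp 3 hA hcA; rewrite s6 hcA in e6.
  have hx : cA \in fixq hp by rewrite unfold_in; apply/eqP; apply/esym/(scal_inj s0).
  exists (MkFF hx); apply: (uniq3 D0) => /=; by rewrite ?Mca ?Mcb ?Mcc.
move=> [x <-]; split; first exact: MfixE (FF_fix x).
by exists (ffval x); exact: Mca.
Qed.


Unset Implicit Arguments.
Theorem lemma3p13 (k : closedFieldType) (p : nat) (hp : p \in [pchar k])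
  (t : 'cV[k]_3) (ht0 : t != 0) (htC : on_fermat p t)
  (ht2 : ~ rat_pt (p ^ 2)%N t) :
  End_iso_Fp6 p t <-> rat_pt (p ^ 6)%N t.
Proof.
split; first exact: fwd.
move=> [c0 [c00 hc0]].
pose s := c0 *: t.
have s0 : s != 0 by rewrite scalemx_eq0 negb_or c00.
have sC : on_fermat p s.
  rewrite /on_fermat; under eq_bigr do rewrite mxE exprMn.
  by rewrite -mulr_sumr htC mulr0.
have sQ : forall i, s i ord0 ^+ (p ^ 6) = s i ord0 by move=> i; rewrite mxE; exact: hc0.
have snr : ~ rat_pt (p ^ 2) s.
  move=> [d [d0 hd]]; apply: ht2; exists (d * c0); split; first by rewrite mulf_neq0.
  by move=> i; rewrite -mulrA; have := hd i; rewrite mxE.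
have [F [f [h1 [h2 [h3 [h4 [h5 h6]]]]]]] := bwd hp s0 sC sQ snr.
exists F, f; do 5 (split => //).
move=> A; rewrite -h6; split; case=> hA [e he]; split => //; exists e.
  by rewrite /s -scalemxAr he scalerA mulrC -scalerA.
apply: (scalerI c00); rewrite scalemxAr -/s he /s scalerA mulrC -scalerA //.
Qed.
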